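(* Let $(\mathcal T,d)$ be a compact rooted $\mathbb R$-tree with root $\rho$, let $N\ge1$, and let $(W_\sigma)_{\sigma\in\mathcal T}$ be a real-valued centered Gaussian process with $\mathrm{Cov}(W_\sigma,W_{\sigma'})=d(\rho,\sigma\wedge\sigma')$. Then there is a constant $c_{1,N}>0$ depending only on $N$ such that for every $\sigma\in\mathcal T$ and all $\sigma_1,\dots,\sigma_N\in\mathcal T$, $$\mathrm{Var}\big(W_\sigma\mid W_{\sigma_0},W_{\sigma_1},\dots,W_{\sigma_N}\big)\ \ge\ c_{1,N}\min_{0\le i\le N}d(\sigma,\sigma_i),$$ where $\sigma_0:=\rho$.
   Context: An $\mathbb R$-tree is a metric space in which any two points are joined by a unique geodesic arc $[\![\sigma,\sigma']\!]$ isometric to a segment, and every injective continuous path between two points has image that geodesic. $\sigma\wedge\sigma'$ denotes the most recent common ancestor, i.e. the point with $[\![\rho,\sigma\wedge\sigma']\!]=[\![\rho,\sigma]\!]\cap[\![\rho,\sigma']\!]$. The conditional variance is $\mathrm{Var}(W_\sigma\mid W_{\sigma_0},\dots,W_{\sigma_N})=\inf_{a\in\mathbb R^{N+1}}\mathrm{Var}\big(W_\sigma-\sum_{i=0}^N a_iW_{\sigma_i}\big)$. *)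

(* Defs.v *)
From Stdlib Require Import Reals Lra.
Open Scope R_scope.

Definition is_metric {T : Type} (d : T -> T -> R) : Prop :=
  (forall x y, 0 <= d x y) /\
  (forall x y, d x y = 0 <-> x = y) /\
  (forall x y, d x y = d y x) /\
  (forall x y z, d x z <= d x y + d y z).

(** Compactness (sequential; equivalent to compactness for metric spaces). *)
Definition seq_compact {T : Type} (d : T -> T -> R) : Prop :=
  forall u : nat -> T, exists (phi : nat -> nat) (l : T),
    (forall n, (phi n < phi (S n))%nat) /\
    (forall eps, 0 < eps -> exists M, forall n, (M <= n)%nat -> d (u (phi n)) l < eps).

Definition is_geodesic {T : Type} (d : T -> T -> R) (x y : T) (g : R -> T) : Prop :=
  g 0 = x /\ g (d x y) = y /\
  forall s t, 0 <= s <= d x y -> 0 <= t <= d x y -> d (g s) (g t) = Rabs (s - t).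

Definition in_arc {T : Type} (d : T -> T -> R) (x y z : T) : Prop :=
  exists g, is_geodesic d x y g /\ exists s, 0 <= s <= d x y /\ g s = z.

Definition inj_cont_path {T : Type} (d : T -> T -> R) (x y : T) (p : R -> T) : Prop :=
  p 0 = x /\ p 1 = y /\
  (forall t, 0 <= t <= 1 -> forall eps, 0 < eps -> exists delta, 0 < delta /\
     forall t', 0 <= t' <= 1 -> Rabs (t - t') < delta -> d (p t) (p t') < eps) /\
  (forall s t, 0 <= s <= 1 -> 0 <= t <= 1 -> p s = p t -> s = t).

Definition is_Rtree {T : Type} (d : T -> T -> R) : Prop :=
  is_metric d /\
  (forall x y, exists g, is_geodesic d x y g) /\
  (forall x y g1 g2, is_geodesic d x y g1 -> is_geodesic d x y g2 ->
     forall s, 0 <= s <= d x y -> g1 s = g2 s) /\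
  (forall x y p, inj_cont_path d x y p ->
     forall z, (exists t, 0 <= t <= 1 /\ p t = z) <-> in_arc d x y z).

Definition is_mrca {T : Type} (d : T -> T -> R) (rho a b m : T) : Prop :=
  forall z, in_arc d rho m z <-> (in_arc d rho a z /\ in_arc d rho b z).

(** Variance of W_sigma - sum_{i=0}^N a_i W_{s i}, computed from the
    covariance function C of the (centered) process W. *)
Definition lin_var {T : Type} (C : T -> T -> R) (sigma : T) (s : nat -> T)
    (N : nat) (a : nat -> R) : R :=
  C sigma sigma
  - 2 * sum_f_R0 (fun i => a i * C sigma (s i)) N
  + sum_f_R0 (fun i => sum_f_R0 (fun j => a i * a j * C (s i) (s j)) N) N.

Fixpoint min_upto (f : nat -> R) (N : nat) : R :=
  match N with
  | O => f O
  | S n => Rmin (min_upto f n) (f (S n))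
  end.

(* Main.v *)
Require Import Defs.
From Stdlib Require Import Reals.
From Stdlib Require Import Lra Lia Classical.
From Coquelicot Require Import Coquelicot.
Open Scope R_scope.

Notation SS := sum_f_R0.

Lemma SS_scal (f : nat -> R) n x : SS (fun i => x * f i) n = x * SS f n.
Proof. rewrite scal_sum. apply sum_eq; intros; ring. Qed.

Lemma SS_opp (f g : nat -> R) n : SS (fun i => f i - g i) n = SS f n - SS g n.
Proof. induction n; simpl; [ring| rewrite IHn; ring]. Qed.

Lemma SS_nonneg (f : nat -> R) n : (forall i, (i <= n)%nat -> 0 <= f i) -> 0 <= SS f n.
Proof.
  induction n; intros H; simpl. apply H; lia.
  assert (0 <= SS f n) by (apply IHn; intros; apply H; lia).
  assert (0 <= f (S n)) by (apply H; lia). lra.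
Qed.

Lemma SS_ge_term (f : nat -> R) n j : (forall i, (i <= n)%nat -> 0 <= f i) -> (j <= n)%nat -> f j <= SS f n.
Proof.
  induction n; intros H Hj; simpl.
  - replace j with 0%nat by lia. lra.
  - destruct (Nat.eq_dec j (S n)) as [->|Hne].
    + assert (0 <= SS f n) by (apply SS_nonneg; intros; apply H; lia). lra.
    + assert (f j <= SS f n) by (apply IHn; [intros; apply H; lia| lia]).
      assert (0 <= f (S n)) by (apply H; lia). lra.
Qed.

Lemma SS_swap (f : nat -> nat -> R) n m :
  SS (fun i => SS (fun j => f i j) m) n = SS (fun j => SS (fun i => f i j) n) m.
Proof.
  induction n; simpl. reflexivity.
  rewrite IHn. rewrite <- sum_plus. reflexivity.
Qed.

Definition e0 (i : nat) : R := match i with O => 1 | _ => 0 end.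

Lemma SS_e0 (f : nat -> R) n : SS (fun i => e0 i * f i) n = f O.
Proof. induction n; simpl. ring. rewrite IHn. ring. Qed.

Lemma SS_const_le (f : nat -> R) n : (forall i, (i <= n)%nat -> f i <= 1) -> SS f n <= INR n + 1.
Proof.
  induction n; intros H; cbn [sum_f_R0]. assert (f 0%nat <= 1) by (apply H; lia). simpl; lra.
  assert (SS f n <= INR n + 1) by (apply IHn; intros; apply H; lia).
  assert (f (S n) <= 1) by (apply H; lia). rewrite S_INR. lra.
Qed.

Section PER.
Variable n : nat.
Variable E : nat -> nat -> R.
Variable b : nat -> R.
Hypothesis E01 : forall j k, E j k = 0 \/ E j k = 1.
Hypothesis Esym : forall j k, E j k = E k j.
Hypothesis Etr : forall j k l, E j k = 1 -> E k l = 1 -> E j l = 1.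

Let nj j := SS (fun k => E j k) n.
Let S j := SS (fun k => E j k * b k) n.
Let w j := E j j / nj j.

Lemma E_diag j k : E j k = 1 -> E j j = 1.
Proof. intros H. apply (Etr j k j); auto. rewrite Esym; auto. Qed.

Lemma E_row j k l : E j k = 1 -> E j l = E k l.
Proof.
  intros H. destruct (E01 j l) as [H1|H1]; destruct (E01 k l) as [H2|H2]; try lra.
  - exfalso. assert (E j l = 1) by (apply (Etr j k l); auto). lra.
  - exfalso. assert (E k l = 1). { apply (Etr k j l); auto. rewrite Esym; auto. } lra.
Qed.

Lemma nj_eq j k : E j k = 1 -> nj j = nj k.
Proof. intros H; unfold nj; apply sum_eq; intros; apply E_row; auto. Qed.
Lemma S_eq j k : E j k = 1 -> S j = S k.
Proof. intros H; unfold S; apply sum_eq; intros; rewrite (E_row j k); auto. Qed.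

Lemma nj_ge1 j : (j <= n)%nat -> E j j = 1 -> 1 <= nj j.
Proof.
  intros Hj H. unfold nj. rewrite <- H.
  apply (SS_ge_term (fun k => E j k)); auto. intros i _; destruct (E01 j i); lra.
Qed.

Lemma row_zero j k : E j j = 0 -> E j k = 0.
Proof. intros H. destruct (E01 j k) as [|H1]; auto. apply E_diag in H1. lra. Qed.

Lemma sum_wE k : (k <= n)%nat -> SS (fun j => w j * E j k) n = E k k.
Proof.
  intros Hk. destruct (E01 k k) as [H|H].
  - rewrite H. transitivity (SS (fun _ => 0) n).
    + apply sum_eq; intros. rewrite Esym, row_zero; auto. ring.
    + clear; induction n; simpl; [ring| rewrite IHn0; ring].
  - assert (Hn := nj_ge1 k Hk H).
    transitivity (SS (fun j => / nj k * E k j) n).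
    + apply sum_eq; intros j _. unfold w. destruct (E01 j k) as [H1|H1].
      * rewrite H1, (Esym k j), H1; ring.
      * rewrite (Esym k j), H1, (E_diag j k H1), (nj_eq j k H1). unfold Rdiv. ring.
    + rewrite SS_scal. change (SS (E k) n) with (nj k). rewrite H. apply Rinv_l. lra.
Qed.

Lemma sum_wSE k : (k <= n)%nat -> SS (fun j => w j * S j * E j k) n = S k * E k k.
Proof.
  intros Hk. rewrite <- sum_wE by auto. rewrite <- SS_scal.
  apply sum_eq; intros j _. destruct (E01 j k) as [H1|H1].
  - rewrite H1; ring.
  - rewrite (S_eq j k H1); ring.
Qed.

Lemma per_quad :
  (SS (fun j => E j j * b j) n) ^ 2 / (INR n + 1)
  <= SS (fun j => SS (fun k => b j * b k * E j k) n) n.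
Proof.
  set (Q := SS (fun j => SS (fun k => b j * b k * E j k) n) n).
  set (B := SS (fun j => E j j * b j) n).
  assert (HQ : Q = SS (fun j => b j * S j) n).
  { unfold Q, S. apply sum_eq; intros j _. rewrite <- SS_scal. apply sum_eq; intros; ring. }
  assert (H1 : SS (fun j => w j * S j) n = B).
  { unfold S at 1. transitivity (SS (fun j => SS (fun k => w j * E j k * b k) n) n).
    { apply sum_eq; intros j _. rewrite <- SS_scal. apply sum_eq; intros; ring. }
    rewrite SS_swap. unfold B. apply sum_eq; intros k Hk.
    rewrite <- (sum_wE k Hk). rewrite Rmult_comm, scal_sum. apply sum_eq; intros; ring. }
  assert (H2 : SS (fun j => w j * S j ^ 2) n = Q).
  { transitivity (SS (fun j => SS (fun k => w j * S j * E j k * b k) n) n).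
    { apply sum_eq; intros j _.
      transitivity (w j * S j * SS (fun k => E j k * b k) n). { change (w j * S j ^ 2 = w j * S j * S j). ring. }
      rewrite <- SS_scal. apply sum_eq; intros; ring. }
    rewrite SS_swap. rewrite HQ. apply sum_eq; intros k Hk.
    transitivity (b k * SS (fun j => w j * S j * E j k) n).
    { rewrite <- SS_scal; apply sum_eq; intros; ring. }
    rewrite sum_wSE by auto. destruct (E01 k k) as [H|H].
    - rewrite H. unfold S. replace (SS (fun k0 => E k k0 * b k0) n) with 0. ring.
      transitivity (SS (fun _ => 0) n).
      + clear -H. induction n; simpl; [ring| rewrite <- IHn0; ring].
      + apply sum_eq; intros. rewrite row_zero; auto; ring.
    - rewrite H; ring. }
  assert (Hw : forall j, (j <= n)%nat -> 0 <= w j <= 1).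
  { intros j Hj. unfold w. destruct (E01 j j) as [H|H].
    - rewrite H. unfold Rdiv; rewrite Rmult_0_l; lra.
    - rewrite H. assert (Hn := nj_ge1 j Hj H). split.
      + unfold Rdiv. rewrite Rmult_1_l. left. apply Rinv_0_lt_compat. lra.
      + unfold Rdiv. rewrite Rmult_1_l. rewrite <- Rinv_1. apply Rinv_le_contravar; lra. }
  assert (HW : SS w n <= INR n + 1) by (apply SS_const_le; intros; apply Hw; auto).
  assert (HW0 : 0 <= SS w n) by (apply SS_nonneg; intros; apply Hw; auto).
  set (al := B / (INR n + 1)).
  assert (H0 : 0 <= SS (fun j => w j * (S j - al) ^ 2) n).
  { apply SS_nonneg; intros j Hj. apply Rmult_le_pos. apply Hw; auto. apply pow2_ge_0. }
  assert (Hexp : SS (fun j => w j * (S j - al) ^ 2) n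
     = SS (fun j => w j * S j ^ 2) n - 2 * al * SS (fun j => w j * S j) n + al ^ 2 * SS w n).
  { rewrite <- !SS_scal. rewrite <- SS_opp, <- sum_plus. apply sum_eq; intros; ring. }
  rewrite Hexp, H1, H2 in H0.
  assert (Hpos : 0 < INR n + 1) by (pose proof (pos_INR n); lra).
  assert (Q >= 2 * al * B - al ^ 2 * (INR n + 1)).
  { assert (al ^ 2 * SS w n <= al ^ 2 * (INR n + 1)) by (apply Rmult_le_compat_l; [nra|auto]). lra. }
  unfold al in H. replace (B ^ 2 / (INR n + 1)) with (2 * (B / (INR n + 1)) * B - (B / (INR n + 1)) ^ 2 * (INR n + 1)).
  lra. field. lra.
Qed.
End PER.

Definition ind (h t : R) : R := if Rle_dec t h then 1 else 0.

Lemma is_RInt_ind h M : 0 <= h <= M -> is_RInt (ind h) 0 M h.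
Proof.
  intros [H0 H1].
  assert (A1 : is_RInt (ind h) 0 h h).
  { apply is_RInt_ext with (fun _ => 1).
    + intros x Hx. rewrite Rmin_left in Hx by lra. rewrite Rmax_right in Hx by lra.
      unfold ind. destruct (Rle_dec x h); lra.
    + pose proof (is_RInt_const (V:=R_NormedModule) 0 h 1) as C.
      assert (E : @scal R_Ring (NormedModule.ModuleSpace R_AbsRing R_NormedModule) (h - 0) 1 = h) by (cbn; unfold mult; simpl; ring).
      rewrite E in C. exact C. }
  assert (A2 : is_RInt (ind h) h M 0).
  { apply is_RInt_ext with (fun _ => 0).
    + intros x Hx. rewrite Rmin_left in Hx by lra. rewrite Rmax_right in Hx by lra.
      unfold ind. destruct (Rle_dec x h); lra.
    + pose proof (is_RInt_const (V:=R_NormedModule) h M 0) as C.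
      assert (E : @scal R_Ring (NormedModule.ModuleSpace R_AbsRing R_NormedModule) (M - h) 0 = 0) by (cbn; unfold mult; simpl; ring).
      rewrite E in C. exact C. }
  pose proof (is_RInt_Chasles _ _ _ _ _ _ A1 A2) as A.
  assert (E : @plus (NormedModule.AbelianMonoid R_AbsRing R_NormedModule) h 0 = h) by (cbn; unfold plus; simpl; ring).
  rewrite E in A. exact A.
Qed.

Lemma is_RInt_SS (f : nat -> R -> R) (l : nat -> R) a b n :
  (forall i, (i <= n)%nat -> is_RInt (f i) a b (l i)) ->
  is_RInt (fun t => SS (fun i => f i t) n) a b (SS l n).
Proof.
  induction n; intros H; simpl.
  - apply H; lia.
  - apply (is_RInt_plus (fun t => SS (fun i => f i t) n) (f (S n))).
    apply IHn; intros; apply H; lia. apply H; lia.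
Qed.

Lemma is_RInt_scal' (f : R -> R) a b k l : is_RInt f a b l -> is_RInt (fun t => k * f t) a b (k * l).
Proof. intros H. apply (is_RInt_scal f a b k l H). Qed.

Lemma ultra_quad (n : nat) (H : nat -> nat -> R) (b : nat -> R) (m M : R) :
  0 <= m <= M ->
  (forall j k, (j <= n)%nat -> (k <= n)%nat -> 0 <= H j k <= M) ->
  (forall j k, H j k = H k j) ->
  (forall j k l, Rmin (H j k) (H k l) <= H j l) ->
  (forall j, (j <= n)%nat -> m <= H j j) ->
  m * (SS b n) ^ 2 / (INR n + 1) <= SS (fun j => SS (fun k => b j * b k * H j k) n) n.
Proof.
  intros Hm HB Hs Hu Hd.
  set (f := fun t => SS (fun j => SS (fun k => b j * b k * ind (H j k) t) n) n).
  set (K := (SS b n) ^ 2 / (INR n + 1)).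
  assert (If : is_RInt f 0 M (SS (fun j => SS (fun k => b j * b k * H j k) n) n)).
  { unfold f. apply (is_RInt_SS (fun j t => SS (fun k => b j * b k * ind (H j k) t) n)).
    intros j Hj. apply (is_RInt_SS (fun k t => b j * b k * ind (H j k) t)).
    intros k Hk. apply is_RInt_scal'. apply is_RInt_ind. auto. }
  assert (Ig : is_RInt (fun t => K * ind m t) 0 M (K * m)).
  { apply is_RInt_scal'. apply is_RInt_ind. auto. }
  assert (Hle : RInt (fun t => K * ind m t) 0 M <= RInt f 0 M).
  { apply RInt_le. lra. eexists; eauto. eexists; eauto.
    intros t Ht.
    set (E := fun j k => ind (H j k) t).
    assert (E01 : forall j k, E j k = 0 \/ E j k = 1).
    { intros; unfold E, ind; destruct Rle_dec; auto. }
    assert (Esym : forall j k, E j k = E k j). { intros; unfold E; rewrite Hs; auto. }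
    assert (Etr : forall j k l, E j k = 1 -> E k l = 1 -> E j l = 1).
    { intros j k l; unfold E, ind. specialize (Hu j k l).
      destruct (Rle_dec t (H j k)); destruct (Rle_dec t (H k l)); destruct (Rle_dec t (H j l)); try lra.
      exfalso. apply n0. apply Rle_trans with (2 := Hu). apply Rmin_glb; auto. }
    pose proof (per_quad n E b E01 Esym Etr) as Hp.
    change (K * ind m t <= SS (fun j => SS (fun k => b j * b k * E j k) n) n).
    unfold ind at 1. destruct (Rle_dec t m).
    - replace (SS (fun j => E j j * b j) n) with (SS b n) in Hp. unfold K; lra.
      apply sum_eq; intros j Hj. unfold E, ind. destruct Rle_dec. ring.
      exfalso. apply n0. specialize (Hd j Hj). lra.
    - assert (0 <= (SS (fun j => E j j * b j) n) ^ 2 / (INR n + 1)).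
      { apply Rmult_le_pos. apply pow2_ge_0. left; apply Rinv_0_lt_compat.
        pose proof (pos_INR n); lra. }
      lra. }
  rewrite (is_RInt_unique _ _ _ _ If), (is_RInt_unique _ _ _ _ Ig) in Hle.
  unfold K in Hle. unfold Rdiv in *. lra.
Qed.

Lemma Rabs_eq_0 x : Rabs x = 0 -> x = 0.
Proof. unfold Rabs; destruct Rcase_abs; lra. Qed.

Section Tree.
Variable T : Type.
Variable d : T -> T -> R.
Hypothesis Htree : is_Rtree d.

Let Hmet : is_metric d. Proof. apply Htree. Qed.
Lemma d_nn x y : 0 <= d x y. Proof. apply Hmet. Qed.
Lemma d_zero x y : d x y = 0 -> x = y. Proof. apply Hmet. Qed.
Lemma d_refl x : d x x = 0. Proof. apply Hmet; auto. Qed.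
Lemma d_sym x y : d x y = d y x. Proof. apply Hmet. Qed.
Lemma d_tri x y z : d x z <= d x y + d y z. Proof. apply Hmet. Qed.

Definition betw x c y := d x c + d c y = d x y.

Lemma geod_dist x y g : is_geodesic d x y g -> forall s, 0 <= s <= d x y ->
  d x (g s) = s /\ d (g s) y = d x y - s.
Proof.
  intros [H0 [H1 H2]] s Hs. split.
  - rewrite <- H0 at 1. rewrite H2 by (try lra; pose proof (d_nn x y); lra).
    rewrite Rabs_left1 by lra. lra.
  - rewrite <- H1 at 1. rewrite H2 by (try lra; pose proof (d_nn x y); lra).
    rewrite Rabs_left1 by lra. lra.
Qed.

Lemma geod_exists x y : exists g, is_geodesic d x y g.
Proof. apply Htree. Qed.

Lemma betw_geod x c y : betw x c y -> forall g, is_geodesic d x y g -> g (d x c) = c.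
Proof.
  intros Hb g Hg.
  destruct (geod_exists x c) as [g1 [A0 [A1 A2]]].
  destruct (geod_exists c y) as [g2 [B0 [B1 B2]]].
  unfold betw in Hb.
  pose proof (d_nn x c). pose proof (d_nn c y).
  set (a := d x c) in *.
  assert (F1 : forall s, 0 <= s <= a -> d (g1 s) c = a - s).
  { intros s Hs. rewrite <- A1 at 1. rewrite A2 by lra. rewrite Rabs_left1 by lra. ring. }
  assert (F3 : forall s, 0 <= s <= a -> d x (g1 s) = s).
  { intros s Hs. rewrite <- A0 at 1. rewrite A2 by lra. rewrite Rabs_left1 by lra. ring. }
  assert (F2 : forall u, 0 <= u <= d c y -> d c (g2 u) = u).
  { intros u Hu. rewrite <- B0 at 1. rewrite B2 by lra. rewrite Rabs_left1 by lra. ring. }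
  assert (F4 : forall u, 0 <= u <= d c y -> d (g2 u) y = d c y - u).
  { intros u Hu. rewrite <- B1 at 1. rewrite B2 by lra. rewrite Rabs_left1 by lra. ring. }
  set (h := fun s => if Rle_dec s a then g1 s else g2 (s - a)).
  assert (Hh : is_geodesic d x y h).
  { split; [|split].
    - unfold h. destruct Rle_dec; [auto| lra].
    - unfold h. destruct Rle_dec.
      + assert (d c y = 0) by lra. apply d_zero in H1. subst y.
        change (g1 a = c). exact A1.
      + replace (d x y - a) with (d c y) by lra. auto.
    - assert (Mix : forall s t, 0 <= s <= a -> a < t <= d x y -> d (g1 s) (g2 (t - a)) = t - s).
      { intros s t Hs Ht.
        assert (L1 : d (g1 s) (g2 (t - a)) <= t - s).
        { eapply Rle_trans. apply (d_tri _ c). rewrite F1, F2 by lra. lra. }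
        assert (L2 : d x y <= d x (g1 s) + d (g1 s) (g2 (t - a)) + d (g2 (t-a)) y).
        { eapply Rle_trans. apply (d_tri _ (g1 s)). pose proof (d_tri (g1 s) (g2 (t-a)) y). lra. }
        rewrite F3, F4 in L2 by lra. lra. }
      intros s t Hs Ht. unfold h.
      destruct (Rle_dec s a); destruct (Rle_dec t a).
      + apply A2; lra.
      + rewrite Mix by lra. rewrite Rabs_left1 by lra. ring.
      + rewrite d_sym, Mix by lra. rewrite Rabs_right by lra. ring.
      + rewrite B2 by lra. f_equal. ring. }
  destruct Htree as [_ [_ [Huniq _]]].
  rewrite (Huniq x y g h Hg Hh a) by lra.
  unfold h. destruct Rle_dec; [|lra]. replace a with (d x c) by reflexivity. exact A1.
Qed.

Lemma arc_betw x y z : in_arc d x y z <-> betw x z y.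
Proof.
  split.
  - intros [g [Hg [s [Hs Hz]]]]. subst z. destruct (geod_dist x y g Hg s Hs). unfold betw. lra.
  - intros Hb. destruct (geod_exists x y) as [g Hg]. exists g. split; auto.
    exists (d x z). split. split. apply d_nn. unfold betw in Hb. pose proof (d_nn z y). lra.
    apply (betw_geod x z y); auto.
Qed.

Lemma betw_order w c c' z : betw w c z -> betw w c' z -> d w c <= d w c' -> betw w c c'.
Proof.
  intros H1 H2 Hle. destruct (geod_exists w z) as [g Hg].
  pose proof (betw_geod _ _ _ H1 g Hg) as E1. pose proof (betw_geod _ _ _ H2 g Hg) as E2.
  destruct Hg as [G0 [G1 G2]].
  unfold betw in *.
  pose proof (d_nn w c); pose proof (d_nn c z); pose proof (d_nn w c'); pose proof (d_nn c' z).
  assert (D : d (g (d w c)) (g (d w c')) = d w c' - d w c).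
  { rewrite G2 by lra. rewrite Rabs_left1 by lra. ring. }
  rewrite E1, E2 in D. lra.
Qed.

Lemma betw_trans w z c a : betw w z c -> betw w c a -> betw w z a.
Proof.
  unfold betw; intros H1 H2. pose proof (d_tri z c a). pose proof (d_tri w z a). lra.
Qed.


Lemma tripod w x y : exists c, betw w c x /\ betw w c y /\ betw x c y.
Proof.
  destruct (geod_exists w x) as [g1 Hg1]. destruct (geod_exists w y) as [g2 Hg2].
  pose proof (geod_dist _ _ _ Hg1) as D1. pose proof (geod_dist _ _ _ Hg2) as D2.
  destruct Hg1 as [A0 [A1 A2]]. destruct Hg2 as [B0 [B1 B2]].
  pose proof (d_nn w x) as Hwx. pose proof (d_nn w y) as Hwy.
  set (M := Rmin (d w x) (d w y)).
  assert (HM1 : M <= d w x) by apply Rmin_l. assert (HM2 : M <= d w y) by apply Rmin_r.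
  assert (HM0 : 0 <= M) by (apply Rmin_glb; lra).
  set (E := fun t => 0 <= t <= M /\ g1 t = g2 t).
  assert (Eb : bound E) by (exists M; intros t [Ht _]; lra).
  assert (Ee : exists t, E t) by (exists 0; split; [lra| congruence]).
  destruct (completeness E Eb Ee) as [ts [Hub Hlub]].
  assert (Hts0 : 0 <= ts) by (apply Hub; split; [lra|congruence]).
  assert (Hts1 : ts <= M) by (apply Hlub; intros t [Ht _]; lra).
  assert (Heq : g1 ts = g2 ts).
  { apply d_zero. destruct (Rle_lt_or_eq_dec 0 _ (d_nn (g1 ts) (g2 ts))) as [Hp|Hp]; [|auto].
    exfalso. set (D := d (g1 ts) (g2 ts)) in *.
    assert (Hex : exists t, E t /\ ts - D/2 < t).
    { apply NNPP; intros Hn. assert (ts <= ts - D/2); [|lra].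
      apply Hlub. intros t Et. apply Rnot_lt_le. intros Hlt. apply Hn. exists t; auto. }
    destruct Hex as [t [[Ht Et] Hlt]].
    assert (t <= ts) by (apply Hub; split; auto).
    pose proof (d_tri (g1 ts) (g1 t) (g2 ts)).
    rewrite A2 in H0 by lra. rewrite Et in H0. rewrite B2 in H0 by lra.
    rewrite (Rabs_minus_sym t ts), Rabs_right in H0 by lra. fold D in H0. lra. }
  set (c := g1 ts).
  assert (Hc1 : betw w c x). { unfold betw, c. destruct (D1 ts); lra. }
  assert (Hc2 : betw w c y). { unfold betw, c. rewrite Heq. destruct (D2 ts); lra. }
  exists c. split; auto. split; auto.
  set (L1 := d w x - ts). set (L2 := d w y - ts). set (L := L1 + L2).
  assert (HL1 : 0 <= L1) by (unfold L1; lra). assert (HL2 : 0 <= L2) by (unfold L2; lra).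
  assert (Hcx : d c x = L1) by (unfold c, L1; destruct (D1 ts); lra).
  assert (Hcy : d c y = L2) by (unfold c, L2; rewrite Heq; destruct (D2 ts); lra).
  destruct (Rle_lt_dec L 0) as [HL0|HL].
  - unfold betw. assert (L1 = 0) by (unfold L in HL0; lra). assert (L2 = 0) by (unfold L in HL0; lra).
    pose proof (d_tri x c y). pose proof (d_nn x y). pose proof (d_sym x c). lra.
  - set (p := fun tau => if Rle_dec (tau * L) L1 then g1 (d w x - tau * L) else g2 (ts + tau * L - L1)).
    assert (Pc1 : forall tau, 0 <= tau <= 1 -> tau * L <= L1 -> d (p tau) c = L1 - tau * L).
    { intros tau Ht Hle. unfold p. destruct Rle_dec; [|lra]. unfold c.
      rewrite A2 by (unfold L1 in *; nra). rewrite Rabs_right by (unfold L1 in *; nra). unfold L1; ring. }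
    assert (Pc2 : forall tau, 0 <= tau <= 1 -> L1 < tau * L -> d (p tau) c = tau * L - L1).
    { intros tau Ht Hle. unfold p. destruct Rle_dec; [lra|]. unfold c. rewrite Heq.
      assert (tau * L <= L) by nra.
      rewrite B2 by (unfold L, L1, L2 in *; nra). rewrite Rabs_right by lra. ring. }
    assert (Rab : forall tau tau', Rabs (tau * L - tau' * L) = L * Rabs (tau - tau')).
    { intros. replace (tau * L - tau' * L) with (L * (tau - tau')) by ring.
      rewrite Rabs_mult, Rabs_right by lra. ring. }
    assert (Lip : forall tau tau', 0 <= tau <= 1 -> 0 <= tau' <= 1 ->
               d (p tau) (p tau') <= L * Rabs (tau - tau')).
    { intros tau tau' Ht Ht'.
      assert (Hm : forall s t, 0 <= s <= 1 -> 0 <= t <= 1 -> s * L <= L1 -> L1 < t * L ->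
                d (p s) (p t) <= L * Rabs (s - t)).
      { intros s t Hs Ht0 H1 H2. eapply Rle_trans. apply (d_tri _ c).
        rewrite (d_sym c), Pc1, Pc2 by auto. rewrite <- Rab.
        rewrite Rabs_left1 by lra. lra. }
      destruct (Rle_dec (tau * L) L1); destruct (Rle_dec (tau' * L) L1).
      - unfold p. destruct Rle_dec; [|lra]. destruct Rle_dec; [|lra].
        rewrite A2 by (unfold L1 in *; nra). rewrite <- Rab. replace (d w x - tau * L - (d w x - tau' * L)) with (tau' * L - tau * L) by ring. rewrite Rabs_minus_sym. lra.
      - apply Hm; auto; lra.
      - rewrite d_sym, Rabs_minus_sym. apply Hm; auto; lra.
      - unfold p. destruct Rle_dec; [lra|]. destruct Rle_dec; [lra|].
        assert (tau * L <= L) by nra. assert (tau' * L <= L) by nra.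
        rewrite B2 by (unfold L, L1, L2 in *; nra). rewrite <- Rab. right. f_equal. ring. }
    assert (Hpath : inj_cont_path d x y p).
    { split; [|split; [|split]].
      - unfold p. destruct Rle_dec; [|lra]. replace (d w x - 0 * L) with (d w x) by ring. auto.
      - unfold p. destruct Rle_dec.
        + assert (L2 = 0) by (unfold L in *; lra). apply d_zero.
          replace (d w x - 1 * L) with ts by (unfold L, L1 in *; lra).
          fold c. lra.
        + replace (ts + 1 * L - L1) with (d w y) by (unfold L, L1, L2; ring). auto.
      - intros t Ht eps Heps. exists (eps / L). split. apply Rdiv_lt_0_compat; lra.
        intros t' Ht' Hd. eapply Rle_lt_trans. apply Lip; auto.
        replace eps with (L * (eps / L)) by (field; lra). apply Rmult_lt_compat_l; auto.
      - assert (Hmix : forall s t, 0 <= s <= 1 -> 0 <= t <= 1 -> s * L <= L1 -> L1 < t * L -> p s <> p t).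
        { intros s t Hs Ht H1 H2 Hst. unfold p in Hst.
          destruct Rle_dec; [|lra]. destruct Rle_dec; [lra|].
          assert (t * L <= L) by nra.
          assert (U1 : d w (g1 (d w x - s * L)) = d w x - s * L) by (apply D1; unfold L1 in *; nra).
          assert (U2 : d w (g2 (ts + t * L - L1)) = ts + t * L - L1) by (apply D2; unfold L, L1, L2 in *; nra).
          rewrite Hst in U1. rewrite U1 in U2.
          assert (E (ts + t * L - L1)).
          { split. split. lra. unfold M. apply Rmin_glb. assert (0 <= s * L) by nra. lra. unfold L, L1, L2 in *; nra.
            replace (g1 (ts + t * L - L1)) with (g1 (d w x - s * L)) by (rewrite U2; auto). exact Hst. }
          assert (ts + t * L - L1 <= ts) by (apply Hub; auto). lra. }
        intros s t Hs Ht Hst.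
        destruct (Rle_dec (s * L) L1); destruct (Rle_dec (t * L) L1).
        + assert (Z : d (p s) (p t) = 0) by (rewrite Hst; apply d_refl).
          unfold p in Z. destruct Rle_dec; [|lra]. destruct Rle_dec; [|lra].
          rewrite A2 in Z by (unfold L1 in *; nra).
          assert (Rabs (s - t) = 0).
          { replace (d w x - s * L - (d w x - t * L)) with (t * L - s * L) in Z by ring.
            rewrite Rab in Z. apply Rmult_integral in Z. destruct Z; [lra| rewrite Rabs_minus_sym; auto]. }
          apply Rabs_eq_0 in H. lra.
        + exfalso. apply (Hmix s t); auto; lra.
        + exfalso. apply (Hmix t s); auto; lra.
        + assert (Z : d (p s) (p t) = 0) by (rewrite Hst; apply d_refl).
          unfold p in Z. destruct Rle_dec; [lra|]. destruct Rle_dec; [lra|].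
          assert (s * L <= L) by nra. assert (t * L <= L) by nra.
          rewrite B2 in Z by (unfold L, L1, L2 in *; nra).
          replace (ts + s * L - L1 - (ts + t * L - L1)) with (s * L - t * L) in Z by ring.
          rewrite Rab in Z. apply Rmult_integral in Z. destruct Z as [Z|Z]; [lra|].
          apply Rabs_eq_0 in Z. lra. }
    destruct Htree as [_ [_ [_ H4]]].
    assert (Ha : in_arc d x y c).
    { apply (H4 x y p Hpath c). exists (L1 / L). split.
      split. unfold Rdiv; apply Rmult_le_pos; [lra| left; apply Rinv_0_lt_compat; lra]. apply Rmult_le_reg_r with L; auto.
      unfold Rdiv. rewrite Rmult_assoc, Rinv_l by lra. unfold L; lra.
      unfold p. replace (L1 / L * L) with L1 by (field; lra).
      destruct Rle_dec; [|lra]. unfold c. f_equal. unfold L1; ring. }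
    apply arc_betw; auto.
Qed.

Definition gp w x y := (d w x + d w y - d x y) / 2.

Lemma C_formula rho (C : T -> T -> R) :
  (forall a b m, is_mrca d rho a b m -> C a b = d rho m) -> forall a b, C a b = gp rho a b.
Proof.
  intros HC a b. destruct (tripod rho a b) as [c [H1 [H2 H3]]].
  rewrite (HC a b c).
  - unfold gp. unfold betw in *. rewrite (d_sym a c) in H3. lra.
  - intros z. rewrite !arc_betw. split.
    + intros Hz. split; eapply betw_trans; eauto.
    + intros [Za Zb]. destruct (Rle_dec (d rho z) (d rho c)) as [Hle|Hlt].
      * apply (betw_order rho z c a); auto.
      * exfalso. assert (Hcz : betw rho c z) by (apply (betw_order rho c z a); auto; lra).
        unfold betw in *. pose proof (d_tri a z b). rewrite (d_sym a z) in H.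
        rewrite (d_sym a c) in H3. lra.
Qed.

Lemma ultra w x y z : Rmin (gp w x z) (gp w z y) <= gp w x y.
Proof.
  destruct (tripod w x z) as [c [H1 [H2 H3]]].
  destruct (tripod w z y) as [c' [K1 [K2 K3]]].
  assert (E1 : gp w x z = d w c) by (unfold gp, betw in *; rewrite (d_sym x c) in H3; lra).
  assert (E2 : gp w z y = d w c') by (unfold gp, betw in *; rewrite (d_sym z c') in K3; lra).
  rewrite E1, E2.
  destruct (Rle_dec (d w c) (d w c')) as [Hle|Hlt].
  - rewrite Rmin_left by auto.
    assert (B : betw w c c') by (apply (betw_order w c c' z); auto).
    assert (By : betw w c y) by (eapply betw_trans; eauto).
    unfold gp, betw in *. pose proof (d_tri x c y). rewrite (d_sym x c) in H. lra.
  - rewrite Rmin_right by lra.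
    assert (B : betw w c' c) by (apply (betw_order w c' c z); auto; lra).
    assert (Bx : betw w c' x) by (eapply betw_trans; eauto).
    unfold gp, betw in *. pose proof (d_tri x c' y). rewrite (d_sym x c') in H. lra.
Qed.

End Tree.

Lemma quad_shift (a v : nat -> R) (X : nat -> nat -> R) n :
  SS (fun i => SS (fun j => a i * a j * (X i j + v i + v j)) n) n
  = SS (fun i => SS (fun j => a i * a j * X i j) n) n + 2 * SS a n * SS (fun i => a i * v i) n.
Proof.
  transitivity (SS (fun i => SS (fun j => a i * a j * X i j) n + (a i * v i) * SS a n + a i * SS (fun j => a j * v j) n) n).
  - apply sum_eq; intros i _. rewrite <- !SS_scal. rewrite <- !sum_plus. apply sum_eq; intros; ring.
  - rewrite !sum_plus.
    assert (E1 : SS (fun i => a i * v i * SS a n) n = SS a n * SS (fun i => a i * v i) n)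
      by (rewrite <- SS_scal; apply sum_eq; intros; ring).
    assert (E2 : SS (fun i => a i * SS (fun j => a j * v j) n) n = SS (fun j => a j * v j) n * SS a n)
      by (rewrite <- SS_scal; apply sum_eq; intros; ring).
    rewrite E1, E2. ring.
Qed.

Lemma quad_e0 (a : nat -> R) (X : nat -> nat -> R) dl n :
  SS (fun i => SS (fun j => (a i + dl * e0 i) * (a j + dl * e0 j) * X i j) n) n
  = SS (fun i => SS (fun j => a i * a j * X i j) n) n + dl * SS (fun j => a j * X 0%nat j) n
    + dl * SS (fun i => a i * X i 0%nat) n + dl ^ 2 * X 0%nat 0%nat.
Proof.
  transitivity (SS (fun i => (SS (fun j => a i * a j * X i j) n + e0 i * (dl * SS (fun j => a j * X i j) n))
      + (dl * (a i * X i 0%nat)) + e0 i * (dl ^ 2 * X i 0%nat)) n).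
  - apply sum_eq; intros i _.
    transitivity (SS (fun j => (a i * a j * X i j + e0 i * dl * (a j * X i j)) + e0 j * (a i * dl * X i j + dl ^ 2 * e0 i * X i j)) n).
    + apply sum_eq; intros; ring.
    + rewrite sum_plus, sum_plus, SS_e0. rewrite (SS_scal (fun l => a l * X i l) n (e0 i * dl)). ring.
  - rewrite !sum_plus, !SS_e0, SS_scal. ring.
Qed.

Lemma min_upto_le (f : nat -> R) n i : (i <= n)%nat -> min_upto f n <= f i.
Proof.
  induction n; intros Hi; simpl.
  - replace i with 0%nat by lia. lra.
  - destruct (Nat.eq_dec i (S n)) as [->|Hne]. apply Rmin_r.
    eapply Rle_trans. apply Rmin_l. apply IHn. lia.
Qed.

Lemma min_upto_nn (f : nat -> R) n : (forall i, 0 <= f i) -> 0 <= min_upto f n.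
Proof. intros H; induction n; simpl; auto. apply Rmin_glb; auto. Qed.

Theorem lemma2p1 :
  forall N : nat, (1 <= N)%nat ->
  exists c : R, 0 < c /\
  forall (T : Type) (d : T -> T -> R) (rho : T),
    is_Rtree d -> seq_compact d ->
  forall C : T -> T -> R,
    (forall a b m, is_mrca d rho a b m -> C a b = d rho m) ->
  forall (sigma : T) (s : nat -> T), s O = rho ->
  forall a : nat -> R,
    lin_var C sigma s N a >= c * min_upto (fun i => d sigma (s i)) N.
Proof.
  intros N HN.
  assert (HNp : 0 < INR N + 1) by (pose proof (pos_INR N); lra).
  exists (1 / (INR N + 1)). split. apply Rdiv_lt_0_compat; lra.
  intros T d rho Htree _ C HC sigma s Hs0 a.
  pose proof (C_formula T d Htree rho C HC) as CF.
  set (m := min_upto (fun i => d sigma (s i)) N).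
  assert (Hmin : forall i, (i <= N)%nat -> m <= d sigma (s i)) by (intros; unfold m; apply (min_upto_le (fun i => d sigma (s i))); auto).
  assert (Hm0 : 0 <= m) by (unfold m; apply (min_upto_nn (fun i => d sigma (s i))); intros; apply d_nn; auto).
  set (H := fun j k => gp T d sigma (s j) (s k)).
  set (A := SS a N). set (dl := 1 - A).
  set (a' := fun i => a i + dl * e0 i).
  set (v := fun x => (d rho x - d sigma x) / 2).
  set (V := SS (fun i => a i * v (s i)) N).
  set (r := d rho sigma).
  assert (Hsym : forall x y, d x y = d y x) by (intros; apply d_sym; auto).
  assert (Hrefl : forall x, d x x = 0) by (intros; apply d_refl; auto).
  assert (Id : lin_var C sigma s N a = SS (fun j => SS (fun k => a' j * a' k * H j k) N) N).
  { unfold lin_var.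
    assert (T1 : C sigma sigma = r) by (rewrite CF; unfold gp, r; rewrite Hrefl; lra).
    assert (T2 : SS (fun i => a i * C sigma (s i)) N = A * r / 2 + V).
    { unfold A, V. transitivity (SS (fun i => r / 2 * a i + a i * v (s i)) N).
      - apply sum_eq; intros. rewrite CF. unfold gp, v, r. field.
      - rewrite sum_plus, SS_scal. field. }
    assert (T3 : SS (fun i => SS (fun j => a i * a j * C (s i) (s j)) N) N
                 = SS (fun i => SS (fun j => a i * a j * H i j) N) N + 2 * A * V).
    { rewrite <- (quad_shift a (fun i => v (s i))). apply sum_eq; intros; apply sum_eq; intros.
      rewrite CF. unfold H, gp, v. field. }
    unfold a'. rewrite quad_e0.
    assert (T4 : SS (fun j => a j * H 0%nat j) N = A * r / 2 - V).
    { unfold A, V. transitivity (SS (fun j => r / 2 * a j - a j * v (s j)) N).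
      - apply sum_eq; intros. unfold H, gp, v, r. rewrite Hs0. rewrite (Hsym sigma rho). field.
      - rewrite SS_opp, SS_scal. field. }
    assert (T5 : SS (fun i => a i * H i 0%nat) N = A * r / 2 - V).
    { rewrite <- T4. apply sum_eq; intros. unfold H, gp. rewrite (Hsym (s i) (s 0%nat)). f_equal. f_equal. lra. }
    assert (T6 : H 0%nat 0%nat = r) by (unfold H, gp, r; rewrite Hs0, Hrefl, Hsym; lra).
    rewrite T1, T2, T3, T4, T5, T6. unfold dl. generalize (SS (fun i : nat => SS (fun j : nat => a i * a j * H i j) N) N). intro Q0. field. }
  set (Mb := m + SS (fun j => d sigma (s j)) N).
  assert (HS0 : 0 <= SS (fun j => d sigma (s j)) N) by (apply SS_nonneg; intros; apply d_nn; auto).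
  assert (Hq := ultra_quad N H a' m Mb).
  assert (Hsa : SS a' N = 1).
  { assert (Se : SS e0 N = 1) by (rewrite <- (SS_e0 (fun _ => 1) N); apply sum_eq; intros; ring).
    unfold a'. rewrite sum_plus, SS_scal, Se. unfold dl, A; ring. }
  rewrite Hsa in Hq. rewrite Id.
  assert (Hfin : m * 1 ^ 2 / (INR N + 1) <= SS (fun j => SS (fun k => a' j * a' k * H j k) N) N).
  { apply Hq.
    - unfold Mb; lra.
    - intros j k Hj Hk. unfold H, gp. split.
      + pose proof (d_tri T d Htree (s j) sigma (s k)). rewrite (Hsym (s j) sigma) in H0. lra.
      + pose proof (d_tri T d Htree sigma (s j) (s k)).
        assert (d sigma (s j) <= SS (fun j => d sigma (s j)) N)
          by (apply (SS_ge_term (fun j => d sigma (s j))); auto; intros; apply d_nn; auto).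
        unfold Mb. pose proof (d_nn T d Htree (s j) (s k)). lra.
    - intros j k. unfold H, gp. rewrite (Hsym (s j) (s k)). lra.
    - intros j k l. unfold H. apply ultra; auto.
    - intros j Hj. unfold H, gp. rewrite Hrefl. specialize (Hmin j Hj). lra. }
  apply Rle_ge. replace (1 / (INR N + 1) * m) with (m * 1 ^ 2 / (INR N + 1)) by (field; lra). exact Hfin.
Qed.
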